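(* Let $u\neq v$ be vertices of $T$ such that $u$ is either an ancestor or a descendant of $v$. Let $u'$ be the vertex reached after executing the routing steps of Case 1 (if $u$ is an ancestor of $v$) or of Case 2 (if $u$ is a descendant of $v$) when routing from $u$ to $v$. Then: (1) If $S_u$ is a proper prefix of $S_v$, then $|S_{u'}|>|S_u|$; moreover, either $S_{u'}=S_v$ or $S_{u'}$ is a proper prefix of $S_v$. (2) If $S_v$ is a proper prefix of $S_u$, then $|S_{u'}|<|S_u|$; moreover, either $S_{u'}=S_v$ or $S_v$ is a proper prefix of $S_{u'}$. (3) Suppose the longest common prefix $S$ of $S_u$ and $S_v$ has length $m<\min\{|S_u|,|S_v|\}$. Then $|S_{u'}|<|S_u|$; moreover, either $S_{u'}=S$ or $S$ is a proper prefix of $S_{u'}$.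
   Context: Let $T$ be a rooted tree on $n$ vertices with positive edge weights. Ancestor/descendant refer to $T$, and a vertex counts as its own ancestor and descendant; ''deepest''/''highest'' refer to depth in $T$. $T_v$ is the subtree of $T$ rooted at $v$. For every non-leaf vertex $v$ fix a child $c_1(v)$ with $|T_{c_1(v)}|$ maximal; edges $(v,c_1(v))$ are leftmost. A subtree $R$ of $T$ is rooted at its vertex closest to the root, $rt(R)$, and inherits the leftmost labelling; $R_v$ is the subtree of $R$ rooted at $v$. $P_R(v)$ is the longest downward path from $v$ in $R$ using only leftmost edges, with last vertex $l(v)$; $l(R):=l(rt(R))$. A vertex $v$ of $R$ is $d$-balanced if $|R_{c_1(v)}|\le |R|-d$ (with $|R_{c_1(v)}|=0$ if $c_1(v)$ is undefined or not in $R$); $b_d(v)$ is the first $d$-balanced vertex on $P_R(v)$, or NULL. $CV(R,d)=\emptyset$ if $b_d(rt(R))$ is NULL, else $\{b\}\cup\bigcup_w CV(R_w,d)$ with $b=b_d(rt(R))$ and $w$ ranging over children of $b$ in $R$. Fix an integer $k\ge4$; for a subtree $R$ with $m$ vertices, $C_R=V(R)$ if $k\ge m/2-1$, else $C_R=CV(R,m/k)\cup\{l(R),rt(R)\}$. Canonical subtrees: $T$ is canonical; if $R$ is canonical, each component of $R$ minus $C_R$ is canonical. Each vertex $v$ lies in $C_R$ for exactly one canonical $R$, denoted $T^v$. Canonical sequences: $T$ is assigned the empty integer sequence; if a canonical subtree $R$ has been assigned the sequence $S$ and the components of $R$ minus $C_R$ are $R_1,\dots,R_p$ (in some fixed order),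 then $R_j$ is assigned $S$ followed by $j$. $S_v$ denotes the sequence assigned to $T^v$. Routing steps: Case 1 ($u$ an ancestor of $v$): let $X$ be the vertices of $C_{T^u}$ that are ancestors of $v$ and $x$ the deepest; move to $x$, then to the child of $x$ that is an ancestor of $v$. Case 2 ($u$ a descendant of $v$): let $X$ be the vertices of $C_{T^u}$ that are descendants of $v$ and ancestors of $u$ and $x$ the highest; move to $x$, then to the parent of $x$. (Moving to the current vertex means staying.) *)

(* Defs.v *)
From mathcomp Require Import all_boot.
Set Implicit Arguments. Unset Strict Implicit. Unset Printing Implicit Defensive.

Definition is_tree (n : nat) (root : 'I_n) (parent : 'I_n -> 'I_n) : Prop :=
  parent root = root /\ forall v, iter n parent v = root.

Definition anc n (parent : 'I_n -> 'I_n) (u v : 'I_n) : bool :=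
  has (fun i => iter i parent v == u) (iota 0 n).

Definition child n (parent : 'I_n -> 'I_n) (w v : 'I_n) : bool :=
  (parent w == v) && (w != v).

Definition haschild n (parent : 'I_n -> 'I_n) (v : 'I_n) : bool :=
  [exists w, child parent w v].

Definition subT n (parent : 'I_n -> 'I_n) (v : 'I_n) : {set 'I_n} :=
  [set w | anc parent v w].

Definition subR n (parent : 'I_n -> 'I_n) (R : {set 'I_n}) (v : 'I_n) : {set 'I_n} :=
  R :&: subT parent v.

Definition leftmost_ok n (parent c1 : 'I_n -> 'I_n) : Prop :=
  forall v, haschild parent v ->
    child parent (c1 v) v /\
    forall w, child parent w v -> #|subT parent w| <= #|subT parent (c1 v)|.

(* rt(R): the vertex of R that is an ancestor of all of R (root as dummy default). *)
Definition rt n (root : 'I_n) (parent : 'I_n -> 'I_n) (R : {set 'I_n}) : 'I_n :=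
  odflt root [pick v in R | [forall w in R, anc parent v w]].

Definition lnext n (parent c1 : 'I_n -> 'I_n) (R : {set 'I_n}) (v : 'I_n) : option 'I_n :=
  if haschild parent v && (c1 v \in R) then Some (c1 v) else None.

Definition sizeR_c1 n (parent c1 : 'I_n -> 'I_n) (R : {set 'I_n}) (v : 'I_n) : nat :=
  if haschild parent v && (c1 v \in R) then #|subR parent R (c1 v)| else 0.

(* v is d-balanced in R, for d = num/den (den > 0):
   |R_{c1 v}| <= |R| - num/den  <->  den*|R_{c1 v}| + num <= den*|R| *)
Definition balanced n (parent c1 : 'I_n -> 'I_n) (num den : nat)
  (R : {set 'I_n}) (v : 'I_n) : bool :=
  den * sizeR_c1 parent c1 R v + num <= den * #|R|.

Fixpoint firstbal n (parent c1 : 'I_n -> 'I_n) (num den : nat)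
  (R : {set 'I_n}) (f : nat) (v : 'I_n) : option 'I_n :=
  match f with
  | 0 => None
  | f'.+1 =>
    if v \notin R then None
    else if balanced parent c1 num den R v then Some v
    else match lnext parent c1 R v with
         | Some w => firstbal parent c1 num den R f' w
         | None => None
         end
  end.

Fixpoint lastl n (parent c1 : 'I_n -> 'I_n) (R : {set 'I_n}) (f : nat) (v : 'I_n) : 'I_n :=
  match f with
  | 0 => v
  | f'.+1 => match lnext parent c1 R v with
             | Some w => lastl parent c1 R f' w
             | None => v
             end
  end.

Definition lR n (root : 'I_n) (parent c1 : 'I_n -> 'I_n) (R : {set 'I_n}) : 'I_n :=
  lastl parent c1 R n (rt root parent R).

(* CV(R, num/den), by recursion with fuel (fuel #|R| suffices: children's
   subtrees are strictly smaller). *)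
Fixpoint CVf n (root : 'I_n) (parent c1 : 'I_n -> 'I_n) (num den : nat)
  (f : nat) (R : {set 'I_n}) : {set 'I_n} :=
  match f with
  | 0 => set0
  | f'.+1 =>
    match firstbal parent c1 num den R n (rt root parent R) with
    | None => set0
    | Some b => b |: \bigcup_(w in R | child parent w b)
                        CVf root parent c1 num den f' (subR parent R w)
    end
  end.

Definition CV n (root : 'I_n) (parent c1 : 'I_n -> 'I_n) (num den : nat)
  (R : {set 'I_n}) : {set 'I_n} :=
  CVf root parent c1 num den #|R| R.

(* C_R:  k >= m/2 - 1  <->  m <= 2k+2 ;  d = m/k *)
Definition CR n (root : 'I_n) (parent c1 : 'I_n -> 'I_n) (k : nat)
  (R : {set 'I_n}) : {set 'I_n} :=
  let m := #|R| in
  if m <= 2 * k + 2 then R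
  else CV root parent c1 m k R :|: [set lR root parent c1 R; rt root parent R].

Definition adj n (parent : 'I_n -> 'I_n) (x y : 'I_n) : bool :=
  child parent x y || child parent y x.

Definition relA n (parent : 'I_n -> 'I_n) (A : {set 'I_n}) : rel 'I_n :=
  fun x y => [&& x \in A, y \in A & adj parent x y].

Definition comps n (parent : 'I_n -> 'I_n) (A : {set 'I_n}) : {set {set 'I_n}} :=
  [set [set y | connect (relA parent A) x y] | x in A].

Inductive canonical n (root : 'I_n) (parent c1 : 'I_n -> 'I_n) (k : nat) :
  {set 'I_n} -> Prop :=
| canT : canonical root parent c1 k setT
| canC (R X : {set 'I_n}) :
    canonical root parent c1 k R ->
    X \in comps parent (R :\: CR root parent c1 k R) ->
    canonical root parent c1 k X.

Definition ord_ok n (root : 'I_n) (parent c1 : 'I_n -> 'I_n) (k : nat)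
  (ord : {set 'I_n} -> seq {set 'I_n}) : Prop :=
  forall R, canonical root parent c1 k R ->
    uniq (ord R) /\
    forall X, (X \in ord R) = (X \in comps parent (R :\: CR root parent c1 k R)).

(* seqOf R S : canonical subtree R is assigned the sequence S
   (the j-th component, 1-based, gets S followed by j) *)
Inductive seqOf n (root : 'I_n) (parent c1 : 'I_n -> 'I_n) (k : nat)
  (ord : {set 'I_n} -> seq {set 'I_n}) : {set 'I_n} -> seq nat -> Prop :=
| seqT : seqOf root parent c1 k ord setT [::]
| seqC (R X : {set 'I_n}) (S : seq nat) :
    seqOf root parent c1 k ord R S ->
    X \in comps parent (R :\: CR root parent c1 k R) ->
    seqOf root parent c1 k ord X (rcons S (index X (ord R)).+1).

(* routing steps; X = C_{T^u} *)
Definition case1 n (parent : 'I_n -> 'I_n) (X : {set 'I_n}) (u v u' : 'I_n) : Prop :=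
  exists x, [/\ x \in X, anc parent x v,
            (forall y, y \in X -> anc parent y v -> anc parent y x),
            child parent u' x & anc parent u' v].

Definition case2 n (parent : 'I_n -> 'I_n) (X : {set 'I_n}) (u v u' : 'I_n) : Prop :=
  exists x, [/\ x \in X, anc parent v x, anc parent x u,
            (forall y, y \in X -> anc parent v y -> anc parent y u -> anc parent x y)
            & u' = parent x].

Definition route n (parent : 'I_n -> 'I_n) (X : {set 'I_n}) (u v u' : 'I_n) : Prop :=
  if anc parent u v then case1 parent X u v u'
  else if anc parent v u then case2 parent X u v u'
  else False.

Definition pprefix (s t : seq nat) : bool := prefix s t && (s != t).

Fixpoint lcp (s t : seq nat) : seq nat :=
  match s, t with
  | a :: s', b :: t' => if a == b then a :: lcp s' t' else [::]
  | _, _ => [::]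
  end.

(* Main.v *)
Require Import Defs.
From mathcomp Require Import all_boot.
Set Implicit Arguments. Unset Strict Implicit. Unset Printing Implicit Defensive.

Module P1.

Section Tree.
Variables (n : nat) (root : 'I_n) (parent : 'I_n -> 'I_n).
Hypothesis Ht : is_tree root parent.

Lemma par_root : parent root = root.
Proof. by case: Ht. Qed.

Lemma iter_n v : iter n parent v = root.
Proof. by case: Ht. Qed.

Lemma iter_root i : iter i parent root = root.
Proof. elim: i => //= i ->; exact: par_root. Qed.

Lemma iter_periodic m x : 0 < m -> iter m parent x = x -> x = root.
Proof.
move=> m0 Hx.
have Hk : forall j, iter (j * m) parent x = x.
  by elim=> [|j IH] //=; rewrite mulSn iterD IH Hx.
have le : n <= n * m by rewrite leq_pmulr.
by rewrite -(Hk n) -(subnK le) iterD iter_n iter_root.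
Qed.

Lemma ancP a b : reflect (exists j, iter j parent b = a) (anc parent a b).
Proof.
apply: (iffP idP).
  by case/hasP=> i _ /eqP <-; exists i.
case=> j Hj; apply/hasP.
case: (ltnP j n) => jn.
  by exists j; [rewrite mem_iota | apply/eqP].
have Ha : a = root by rewrite -Hj -(subnK jn) iterD iter_n iter_root.
have : ~~ injectiveb (fun i : 'I_n.+1 => iter i parent b).
  by apply/negP=> /injectiveP /leq_card; rewrite !card_ord ltnn.
case/injectivePn=> i [i' ne Heq].
have key : forall p q : 'I_n.+1, p < q -> iter p parent b = iter q parent b ->
   exists2 x, x \in iota 0 n & iter x parent b == a.
  move=> p q pq E; exists (nat_of_ord p).
    by rewrite mem_iota /= add0n (leq_trans pq) // -ltnS.
  have : iter (q - p) parent (iter p parent b) = iter p parent b.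
    by rewrite -iterD subnK ?E // ltnW.
  by move/iter_periodic; rewrite subn_gt0 Ha => ->.
case: (ltngtP i i') => c.
- exact: key c Heq.
- exact: key c (esym Heq).
- by move/eqP: ne; case; apply: val_inj.
Qed.

Lemma anc_refl a : anc parent a a.
Proof. by apply/ancP; exists 0. Qed.

Lemma anc_trans a b c : anc parent a b -> anc parent b c -> anc parent a c.
Proof.
move=> /ancP [i Hi] /ancP [j Hj]; apply/ancP; exists (i + j).
by rewrite iterD Hj.
Qed.

Lemma anc_root b : anc parent root b.
Proof. by apply/ancP; exists n; rewrite iter_n. Qed.

Lemma anc_par b : anc parent (parent b) b.
Proof. by apply/ancP; exists 1. Qed.

Lemma anc_antisym a b : anc parent a b -> anc parent b a -> a = b.
Proof.
move=> /ancP [i Hi] /ancP [j Hj].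
have E : iter (i + j) parent a = a by rewrite iterD Hj.
case: (posnP (i + j)) => s.
  by move/eqP: s Hi; rewrite addn_eq0 => /andP [/eqP -> _] /= ->.
have ar := iter_periodic s E.
by rewrite -Hi -Hj ar !iter_root.
Qed.

Lemma anc_total a b y : anc parent a y -> anc parent b y ->
  anc parent a b \/ anc parent b a.
Proof.
move=> /ancP [i Hi] /ancP [j Hj].
case: (leqP i j) => ij.
  by right; apply/ancP; exists (j - i); rewrite -Hi -iterD subnK.
by left; apply/ancP; exists (i - j); rewrite -Hj -iterD subnK // ltnW.
Qed.

Lemma anc_parS a b : anc parent a b -> a != b -> anc parent a (parent b).
Proof.
move=> /ancP [[|i] Hi] ne; first by rewrite -Hi eqxx in ne.
by apply/ancP; exists i; rewrite -iterSr.
Qed.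

Lemma anc_of_par a b : anc parent a (parent b) -> anc parent a b.
Proof. by move=> H; apply: anc_trans H (anc_par b). Qed.

Lemma anc_self_par x : anc parent x (parent x) -> x = root.
Proof.
move=> H; have E : x = parent x by apply: anc_antisym H (anc_par x).
by apply: (@iter_periodic 1).
Qed.

Lemma anc_to_root a : anc parent a root -> a = root.
Proof. by move=> H; apply: anc_antisym H (anc_root a). Qed.

Lemma child_par c y : child parent c y -> parent c = y.
Proof. by case/andP=> /eqP. Qed.

Lemma child_neq c y : child parent c y -> c != y.
Proof. by case/andP. Qed.

Lemma child_nroot c y : child parent c y -> c != root.
Proof.
move=> H; apply/eqP=> E; move: (child_neq H); rewrite -(child_par H) E par_root.
by rewrite eqxx.
Qed.

Lemma child_anc c y : child parent c y -> anc parent y c.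
Proof. by move=> H; rewrite -(child_par H); apply: anc_par. Qed.

Lemma child_intro c : c != root -> child parent c (parent c).
Proof.
move=> ne; apply/andP; split => //; apply/eqP=> E.
by move/eqP: ne; apply; apply: (@iter_periodic 1).
Qed.

Lemma anc_child_between z c y : child parent c y -> anc parent z c ->
  z != c -> anc parent z y.
Proof. by move=> H a ne; rewrite -(child_par H); apply: anc_parS. Qed.

Lemma walk_down (A : {set 'I_n}) a b : a \in A -> b \notin A -> anc parent a b ->
  exists y c, [/\ y \in A, c \notin A, child parent c y, anc parent a y & anc parent c b].
Proof.
move=> aA bA /ancP [j]; elim: j b bA => [|j IH] b bA Hj.
  by move: Hj => /= Hj; rewrite Hj aA in bA.
rewrite iterSr in Hj.
have bnr : b != root.
  apply/eqP=> E; move: Hj; rewrite E par_root iter_root => E2.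
  by move: aA; rewrite -E2 -E (negbTE bA).
case pA : (parent b \in A).
  exists (parent b), b; split => //; first exact: child_intro.
    by apply/ancP; exists j.
  exact: anc_refl.
have [y [c [yA cA ch ay cb]]] := IH _ (negbT pA) Hj.
by exists y, c; split => //; apply: anc_of_par.
Qed.

Lemma walk_up (A : {set 'I_n}) a b : a \in A -> b \notin A -> anc parent b a ->
  exists y, [/\ y \in A, parent y \notin A, anc parent b y & anc parent y a].
Proof.
move=> aA bA /ancP [j]; elim: j a aA => [|j IH] a aA Hj.
  by move: Hj => /= Hj; rewrite -Hj aA in bA.
rewrite iterSr in Hj.
case pA : (parent a \in A).
  have [y [yA pyA bY ya]] := IH _ pA Hj.
  by exists y; split => //; apply: anc_trans ya (anc_par a).
exists a; split => //; first by rewrite pA.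
  by apply/ancP; exists j.+1; rewrite iterSr.
exact: anc_refl.
Qed.

Lemma adj_sym : symmetric (adj parent).
Proof. by move=> x y; rewrite /adj orbC. Qed.

Lemma relA_sym (A : {set 'I_n}) : symmetric (relA parent A).
Proof. by move=> x y; rewrite /relA adj_sym andbCA. Qed.

Lemma connA_sym (A : {set 'I_n}) x y :
  connect (relA parent A) x y = connect (relA parent A) y x.
Proof. exact: (sym_connect_sym (relA_sym A)). Qed.

Lemma anc_connect (A : {set 'I_n}) a b : anc parent a b ->
  (forall z, anc parent a z -> anc parent z b -> z \in A) ->
  connect (relA parent A) a b.
Proof.
move=> /ancP [j]; elim: j b => [|j IH] b Hj HA.
  by move: Hj => /= <-; rewrite connect0.
rewrite iterSr in Hj.
case: (eqVneq b root) => [br|bnr].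
  by move: Hj; rewrite br par_root iter_root => <-; rewrite connect0.
apply: (@connect_trans _ _ (parent b)).
  apply: IH => // z az zp; apply: HA => //; exact: anc_of_par.
apply: connect1; rewrite /relA; apply/and3P; split.
- by apply: HA; [apply/ancP; exists j | apply: anc_par].
- by apply: HA; [apply/ancP; exists j.+1; rewrite iterSr | apply: anc_refl].
- by rewrite /adj child_intro ?orbT.
Qed.

Definition conn (X : {set 'I_n}) :=
  forall a b, a \in X -> b \in X -> connect (relA parent X) a b.

Lemma conn_convex (X : {set 'I_n}) a b y : conn X -> a \in X -> b \in X ->
  anc parent a y -> anc parent y b -> y \in X.
Proof.
move=> cX aX bX ay yb.
case: (eqVneq a y) => [<-|ney] //.
have nya : ~~ anc parent y a.
  by apply/negP=> ya; move/eqP: ney; apply; apply: anc_antisym.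
have /connectP [p Hp Hl] := cX _ _ bX aX.
elim: p b bX yb Hp Hl => [|t p IH] s sX ys /= Hp Hl.
  by move: nya; rewrite Hl ys.
case/andP: Hp => st Hp.
case yt: (anc parent y t).
  by apply: IH Hp Hl => //; case/and3P: st.
case/and3P: st => _ tX; rewrite /adj => /orP [] ch.
- case: (eqVneq y s) => [-> //|nys].
  by move: (anc_parS ys nys); rewrite (child_par ch) yt.
- by move: (anc_trans ys (child_anc ch)); rewrite yt.
Qed.

Lemma desc_path (X : {set 'I_n}) r : r \in X -> (parent r \in X -> r = root) ->
  forall p s, path (relA parent X) s p -> anc parent r s -> anc parent r (last s p).
Proof.
move=> rX Hp; elim=> [|t p IH] s //= /andP [st Hpth] rs; apply: IH Hpth _.
case/and3P: st => sX tX /orP [] ch.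
- case: (eqVneq s r) => [E|ne].
    move: tX; rewrite -(child_par ch) E => /Hp rr.
    rewrite rr par_root; exact: anc_refl.
  by rewrite -(child_par ch); apply: anc_parS rs _; rewrite eq_sym.
- exact: anc_trans rs (child_anc ch).
Qed.

Lemma desc_top (X : {set 'I_n}) r : conn X -> r \in X -> (parent r \in X -> r = root) ->
  forall w, w \in X -> anc parent r w.
Proof.
move=> cX rX Hp w wX.
have /connectP [p Hpth ->] := cX _ _ rX wX.
exact: desc_path rX Hp p r Hpth (anc_refl r).
Qed.

Lemma top_exists (X : {set 'I_n}) a : conn X -> a \in X ->
  exists2 r, r \in X & forall w, w \in X -> anc parent r w.
Proof.
move=> cX aX; case rX : (root \in X).
  by exists root => // w _; apply: anc_root.
have [y [yX pyX _ _]] := walk_up aX (negbT rX) (anc_root a).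
exists y => //; apply: desc_top => // H; by rewrite H in pyX.
Qed.

Lemma rt_eq (X : {set 'I_n}) r : r \in X -> (forall w, w \in X -> anc parent r w) ->
  rt root parent X = r.
Proof.
move=> rX Hr; rewrite /rt; case: pickP => [v /andP [vX /forall_inP Hv] | H] /=.
  exact: anc_antisym (Hv _ rX) (Hr _ vX).
move: (H r); rewrite rX /= => /negbT /negP; case; apply/forall_inP => w wX.
exact: Hr.
Qed.

Lemma path_last_in (A : {set 'I_n}) : forall p s, s \in A ->
  path (relA parent A) s p -> last s p \in A.
Proof.
elim=> [|t p IH] s //= sA /andP [st Hp]; apply: IH Hp; by case/and3P: st.
Qed.

Lemma comps_sub (A X : {set 'I_n}) : X \in comps parent A -> X \subset A.
Proof.
case/imsetP=> x xA ->; apply/subsetP=> y; rewrite inE => /connectP [p Hp ->].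
exact: path_last_in.
Qed.

Lemma comps_in (A X : {set 'I_n}) x y : X \in comps parent A -> x \in X ->
  connect (relA parent A) x y -> y \in X.
Proof.
case/imsetP=> z zA ->; rewrite !inE => zx xy; exact: connect_trans zx xy.
Qed.

Lemma comps_adj (A X : {set 'I_n}) x y : X \in comps parent A -> x \in X ->
  y \in A -> adj parent x y -> y \in X.
Proof.
move=> XA xX yA axy; apply: (comps_in (XA) xX); apply: connect1.
apply/and3P; split => //; by move/subsetP: (comps_sub XA); apply.
Qed.

Lemma comps_eq (A X Y : {set 'I_n}) w : X \in comps parent A -> Y \in comps parent A ->
  w \in X -> w \in Y -> X = Y.
Proof.
move=> XA YA wX wY; apply/setP=> z.
case/imsetP: XA wX => x xA ->; case/imsetP: YA wY => y yA ->; rewrite !inE => yw xw.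
apply/idP/idP => H.
- apply: connect_trans yw _; apply: connect_trans _ H; by rewrite connA_sym.
- apply: connect_trans xw _; apply: connect_trans _ H; by rewrite connA_sym.
Qed.

Lemma comps_conn (A X : {set 'I_n}) : X \in comps parent A -> conn X.
Proof.
move=> XA a b aX bX.
have ab : connect (relA parent A) a b.
  case/imsetP: (XA) (aX) (bX) => x xA ->; rewrite !inE => xa xb.
  apply: connect_trans xb; by rewrite connA_sym.
case/connectP: ab => p Hp ->; apply/connectP; exists p => //.
elim: p a aX Hp {bX} => [|t p IH] s //= sX /andP [st Hp].
have tX : t \in X by apply: comps_in XA sX (connect1 st).
rewrite IH // andbT /relA sX tX; by case/and3P: st.
Qed.

Lemma comps_ne (A X : {set 'I_n}) : X \in comps parent A -> exists x, x \in X.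
Proof. by case/imsetP=> x xA ->; exists x; rewrite inE connect0. Qed.

Section C1.
Variable c1 : 'I_n -> 'I_n.
Hypothesis Hl : leftmost_ok parent c1.

Definition chain a b := forall z, anc parent a z -> anc parent z b -> z != b ->
  child parent (c1 z) z /\ anc parent (c1 z) b.

Lemma chain_sub a a' b : anc parent a a' -> chain a b -> chain a' b.
Proof. by move=> aa' H z a'z zb nz; apply: H => //; apply: anc_trans aa' a'z. Qed.

Lemma chain_refl a : chain a a.
Proof.
move=> z az za; have -> : z = a by apply: anc_antisym.
by rewrite eqxx.
Qed.

Lemma lnext_some (R : {set 'I_n}) v w : lnext parent c1 R v = Some w ->
  [/\ w = c1 v, child parent (c1 v) v & c1 v \in R].
Proof.
rewrite /lnext; case: ifP => // /andP [hc inR] [<-]; split => //.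
by case: (Hl hc).
Qed.

Lemma chain_step v w c : child parent w v -> w = c1 v -> anc parent w c ->
  chain w c -> chain v c.
Proof.
move=> ch Ew wc chw z vz zc nz.
case: (eqVneq z v) => [->|zv]; first by rewrite -Ew.
have wz : anc parent w z.
  case: (anc_total zc wc) => // zw.
  case: (eqVneq z w) => [->|nzw]; first exact: anc_refl.
  have zv' := anc_child_between ch zw nzw.
  by move/eqP: zv; case; apply: anc_antisym.
exact: chw.
Qed.

Lemma firstbal_spec num den (R : {set 'I_n}) : forall f v c,
  firstbal parent c1 num den R f v = Some c ->
  [/\ c \in R, anc parent v c & chain v c].
Proof.
elim=> [|f IH] v c //=.
case: ifP => [//|/negbFE vR].
case: ifP => [_ [<-]|_]; first by split => //; [apply: anc_refl | apply: chain_refl].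
case E: (lnext parent c1 R v) => [w|] // H.
have [Ew ch wR] := lnext_some E.
have [cR wc chw] := IH _ _ H.
rewrite -Ew in ch; split => //; first exact: anc_trans (child_anc ch) wc.
exact: chain_step ch Ew wc chw.
Qed.

Lemma lastl_spec (R : {set 'I_n}) : forall f v,
  anc parent v (lastl parent c1 R f v) /\ chain v (lastl parent c1 R f v).
Proof.
elim=> [|f IH] v /=; first by split; [apply: anc_refl | apply: chain_refl].
case E: (lnext parent c1 R v) => [w|]; last by split; [apply: anc_refl | apply: chain_refl].
have [Ew ch wR] := lnext_some E.
have [wc chw] := IH w.
rewrite -Ew in ch; split; first exact: anc_trans (child_anc ch) wc.
exact: chain_step ch Ew wc chw.
Qed.

Lemma lastl_in (R : {set 'I_n}) : forall f v, v \in R -> lastl parent c1 R f v \in R.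
Proof.
elim=> [|f IH] v vR //=.
case E: (lnext parent c1 R v) => [w|] //.
have [Ew ch wR] := lnext_some E; apply: IH; by rewrite Ew.
Qed.

Lemma lastl_reach (X : {set 'I_n}) y : c1 y \notin X -> forall f r i,
  chain r y -> (forall z, anc parent r z -> anc parent z y -> z \in X) ->
  iter i parent y = r -> i <= f -> lastl parent c1 X f r = y.
Proof.
move=> cy; elim=> [|f IH] r i chr HX Hi If.
  by move: If; rewrite leqn0 => /eqP Ei; move: Hi; rewrite Ei /= => ->.
have ry : anc parent r y by apply/ancP; exists i.
case: (eqVneq r y) => [->|nry].
  by rewrite /= /lnext (negbTE cy) andbF.
have [ch cy'] := chr r (anc_refl r) ry nry.
have cX : c1 r \in X by apply: HX => //; apply: child_anc.
have -> : lastl parent c1 X f.+1 r = lastl parent c1 X f (c1 r).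
  rewrite /= /lnext cX andbT.
  have -> : haschild parent r by apply/existsP; exists (c1 r).
  by [].
case/ancP: cy' => j Hj.
have ji : j < i.
  rewrite ltnNge; apply/negP => ij.
  have : iter (j - i).+1 parent (c1 r) = c1 r.
    by rewrite iterSr (child_par ch) -{1}Hi -iterD subnK.
  move/(iter_periodic (ltn0Sn _)) => E.
  by move/negP: (child_nroot ch); rewrite E eqxx.
apply: (IH _ j) => //.
- exact: chain_sub (child_anc ch) chr.
- by move=> z cz zy; apply: HX => //; apply: anc_trans (child_anc ch) cz.
- by rewrite -ltnS (leq_trans ji).
Qed.

Lemma CVf_sub num den : forall f (R : {set 'I_n}),
  CVf root parent c1 num den f R \subset R.
Proof.
elim=> [|f IH] R /=; first exact: sub0set.
case E: (firstbal parent c1 num den R n (rt root parent R)) => [b|];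
  last exact: sub0set.
have [bR _ _] := firstbal_spec E.
apply/subsetP=> x; rewrite in_setU1 => /orP [/eqP -> //|].
case/bigcupP=> w /andP [wR _] xC.
by move/subsetP: (IH (subR parent R w)) => /(_ _ xC); rewrite /subR inE => /andP [].
Qed.

Lemma rt_subR (R : {set 'I_n}) w : w \in R -> rt root parent (subR parent R w) = w.
Proof.
move=> wR; apply: rt_eq; first by rewrite /subR inE wR inE anc_refl.
by move=> x; rewrite /subR !inE => /andP [].
Qed.

Lemma CVf_spec num den : forall f (R : {set 'I_n}) c,
  c \in CVf root parent c1 num den f R ->
  exists z0, [/\ anc parent z0 c, chain z0 c &
     (z0 = rt root parent R \/ parent z0 \in CVf root parent c1 num den f R)].
Proof.
elim=> [|f IH] R c /=; first by rewrite inE.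
case E: (firstbal parent c1 num den R n (rt root parent R)) => [b|];
  last by rewrite inE.
have [bR rb chb] := firstbal_spec E.
rewrite in_setU1 => /orP [/eqP ->|].
  by exists (rt root parent R); split => //; left.
case/bigcupP=> w /andP [wR wb] cC.
have [z0 [zc chz [Ez|Pz]]] := IH _ _ cC; exists z0; split => //; right.
- by rewrite Ez rt_subR // (child_par wb) setU11.
- by rewrite setU1r //; apply/bigcupP; exists w => //; rewrite wR.
Qed.

End C1.
End Tree.

End P1.
Import P1.

Section Main.
Variables (n : nat) (root : 'I_n) (parent c1 : 'I_n -> 'I_n) (k : nat)
  (ord : {set 'I_n} -> seq {set 'I_n}).
Hypothesis Ht : is_tree root parent.
Hypothesis Hl : leftmost_ok parent c1.
Hypothesis Hord : ord_ok root parent c1 k ord.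

Local Notation par_root := (P1.par_root Ht).
Local Notation iter_n := (P1.iter_n Ht).
Local Notation iter_root := (P1.iter_root Ht).
Local Notation iter_periodic := (P1.iter_periodic Ht).
Local Notation ancP := (P1.ancP Ht).
Local Notation anc_refl := (P1.anc_refl Ht).
Local Notation anc_trans := (P1.anc_trans Ht).
Local Notation anc_root := (P1.anc_root Ht).
Local Notation anc_par := (P1.anc_par Ht).
Local Notation anc_antisym := (P1.anc_antisym Ht).
Local Notation anc_total := (P1.anc_total Ht).
Local Notation anc_parS := (P1.anc_parS Ht).
Local Notation anc_of_par := (P1.anc_of_par Ht).
Local Notation anc_self_par := (P1.anc_self_par Ht).
Local Notation anc_to_root := (P1.anc_to_root Ht).
Local Notation child_nroot := (P1.child_nroot Ht).
Local Notation child_anc := (P1.child_anc Ht).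
Local Notation child_intro := (P1.child_intro Ht).
Local Notation anc_child_between := (P1.anc_child_between Ht).
Local Notation walk_down := (P1.walk_down Ht).
Local Notation walk_up := (P1.walk_up Ht).
Local Notation anc_connect := (P1.anc_connect Ht).
Local Notation conn_convex := (P1.conn_convex Ht).
Local Notation desc_path := (P1.desc_path Ht).
Local Notation desc_top := (P1.desc_top Ht).
Local Notation top_exists := (P1.top_exists Ht).
Local Notation rt_eq := (P1.rt_eq Ht).
Local Notation chain_sub := (P1.chain_sub Ht).
Local Notation chain_refl := (P1.chain_refl Ht).
Local Notation chain_step := (P1.chain_step Ht).
Local Notation firstbal_spec := (P1.firstbal_spec Ht).
Local Notation lastl_spec := (P1.lastl_spec Ht).
Local Notation lastl_reach := (P1.lastl_reach Ht).
Local Notation CVf_sub := (P1.CVf_sub Ht).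
Local Notation rt_subR := (P1.rt_subR Ht).
Local Notation CVf_spec := (P1.CVf_spec Ht).
Local Notation CRs := (CR root parent c1 k).
Local Notation rtR := (rt root parent).
Local Notation lRR := (lR root parent c1).

Definition BI (R : {set 'I_n}) := forall y c, y \in R -> child parent c y ->
  c \notin R -> y = lRR R.
Definition Good (R : {set 'I_n}) := [/\ exists a, a \in R, conn parent R & BI R].

Lemma Good_top R : Good R -> rtR R \in R /\ forall w, w \in R -> anc parent (rtR R) w.
Proof.
case=> [[a aR] cR _]; have [r rR Hr] := top_exists cR aR.
by rewrite (rt_eq rR Hr).
Qed.

Lemma rt_in_CR R : rtR R \in R -> rtR R \in CRs R.
Proof. by rewrite /CR; case: ifP => // _ _; rewrite !inE eqxx !orbT. Qed.

Lemma lR_in_CR (R : {set 'I_n}) y : y \in R -> y = lRR R -> y \in CRs R.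
Proof.
move=> yR Ey; rewrite /CR; case: ifP => _; first exact: yR.
by rewrite Ey !inE eqxx !orbT.
Qed.

Lemma CR_sub R : Good R -> CRs R \subset R.
Proof.
move=> GR; have [rR _] := Good_top GR.
rewrite /CR; case: ifP => _; first exact: subxx.
rewrite subUset CVf_sub //=; apply/subsetP=> x; rewrite !inE.
case/orP=> /eqP ->; last exact: rR.
exact: lastl_in.
Qed.

Lemma Good_T : Good setT.
Proof.
split; first by exists root; rewrite inE.
- move=> a b _ _.
  apply: (@connect_trans _ _ root).
    rewrite connA_sym //; apply: (anc_connect); first exact: anc_root.
    by move=> z _ _; rewrite inE.
  apply: (anc_connect); first exact: anc_root.
  by move=> z _ _; rewrite inE.
- by move=> y c _ _; rewrite inE.
Qed.

Lemma Good_comp R X : Good R -> X \in comps parent (R :\: CRs R) -> Good X.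
Proof.
move=> GR XA.
have cX := comps_conn XA; have [a aX] := comps_ne XA.
split => //; first by exists a.
move=> y c yX ch cX'.
have XsubA := subsetP (comps_sub XA).
have XsubR : forall x, x \in X -> x \in R.
  by move=> x /XsubA; rewrite inE => /andP [].
have XsubC : forall x, x \in X -> x \notin CRs R.
  by move=> x /XsubA; rewrite inE => /andP [].
have yR := XsubR _ yX; have yC := XsubC _ yX.
case: (GR) => _ _ GRb; have [rtRR Hrt] := Good_top GR.
case cR: (c \in R); last first.
  have := GRb _ _ yR ch (negbT cR) => /(lR_in_CR yR) yC'.
  by rewrite yC' in yC.
case cC: (c \in CRs R); last first.
  have : c \in X.
    apply: (comps_adj XA yX); first by rewrite inE cC cR.
    by rewrite /adj ch orbT.
  by rewrite (negbTE cX').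
have big : ~~ (#|R| <= 2 * k + 2).
  by apply/negP => sm; move: yC; rewrite /CR sm yR.
have Hnotrt : c != rtR R.
  apply/eqP => E; have := Hrt _ yR; rewrite -E -(child_par ch) => /(anc_self_par) E'.
  by move/negP: (child_nroot ch); rewrite E' eqxx.
have [z0 [zc chz Hz]] : exists z0, [/\ anc parent z0 c, chain parent c1 z0 c &
    (z0 = rtR R \/ parent z0 \in CRs R)].
  move: cC; rewrite /CR /= (negbTE big) !inE => /orP [cCV|/orP [/eqP Ec|/eqP Ec]].
  - rewrite /CV in cCV; have [z0 [zc chz Hz]] := CVf_spec Hl cCV.
    exists z0; split => //; case: Hz => [->|Pz]; [by left | right].
    by rewrite !inE Pz.
  - exists (rtR R); rewrite Ec /lR; split; last by left.
    + by case: (lastl_spec Hl R n (rtR R)).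
    + by case: (lastl_spec Hl R n (rtR R)).
  - by rewrite Ec eqxx in Hnotrt.
have z0c : z0 != c.
  apply/eqP=> E; case: Hz => [E'|Pz].
    by rewrite -E E' eqxx in Hnotrt.
  by move: Pz; rewrite E (child_par ch) (negbTE yC).
have z0y : anc parent z0 y by rewrite -(child_par ch); apply: anc_parS.
have cny : y != c by rewrite eq_sym (child_neq ch).
have [chy cyc] := chz y z0y (child_anc ch) cny.
have cnroot : forall w, anc parent w c -> anc parent w y -> w != c.
  move=> w _ wy; apply/eqP=> E; move: wy; rewrite E -(child_par ch).
  move/(anc_self_par) => E'.
  by move/negP: (child_nroot ch); rewrite E' eqxx.
have Ec1 : c1 y = c.
  apply/eqP; apply/negPn/negP => ne.
  have := anc_child_between ch cyc ne.
  rewrite -{2}(child_par chy) => /(anc_self_par) E'.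
  by move/negP: (child_nroot chy); rewrite E' eqxx.
have chzy : chain parent c1 z0 y.
  move=> z az zy nz.
  have zc' := anc_trans zy (child_anc ch).
  have [chz1 cz] := chz z az zc' (cnroot _ zc' zy).
  split => //; apply: (anc_child_between ch cz).
  apply/eqP=> E; move/eqP: nz; apply.
  by rewrite -(child_par chz1) E (child_par ch).
have [r rX Hr] := top_exists cX aX.
rewrite /lR (rt_eq rX Hr).
have ry := Hr _ yX.
have z0r : anc parent z0 r.
  case: (anc_total z0y ry) => // rz0.
  case: (eqVneq r z0) => [->|nrz]; first exact: anc_refl.
  exfalso; case: Hz => [E|Pz].
    have := Hrt _ (XsubR r rX); rewrite -E => z0r'.
    by move/eqP: nrz; apply; apply: anc_antisym.
  have : parent z0 \in X.
    apply: (conn_convex cX rX yX); first exact: anc_parS.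
    exact: anc_trans (anc_par z0) z0y.
  by move/XsubC; rewrite Pz.
case/hasP: (ry) => i; rewrite mem_iota => /andP [_ ilt] /eqP Hi.
symmetry; apply: (lastl_reach (X:=X) (y:=y) _ (r:=r) (i:=i)) => //.
- by rewrite Ec1.
- exact: chain_sub z0r chzy.
- by move=> z rz zy; apply: (conn_convex cX rX yX).
- by rewrite add0n in ilt; apply: ltnW.
Qed.


Local Notation seqO := (seqOf root parent c1 k ord).

Lemma seq_can R S : seqO R S -> canonical root parent c1 k R.
Proof. elim=> [|R' X S0 _ IH HX]; [exact: canT | exact: canC IH HX]. Qed.

Lemma can_good R : canonical root parent c1 k R -> Good R.
Proof. elim=> [|R' X _ IH HX]; [exact: Good_T | exact: Good_comp IH HX]. Qed.

Lemma seq_good R S : seqO R S -> Good R.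
Proof. by move/seq_can/can_good. Qed.

Lemma seqOf_inv R S : seqO R S -> (S = [::] /\ R = setT) \/
  exists Q S0, [/\ S = rcons S0 (index R (ord Q)).+1, seqO Q S0 &
                  R \in comps parent (Q :\: CRs Q)].
Proof. case=> [|Q X S0 HQ HX]; [by left | by right; exists Q, S0]. Qed.

Lemma rcons_nil (s : seq nat) x : rcons s x <> [::].
Proof. by case: s. Qed.

Lemma seq_fun R1 R2 S : seqO R1 S -> seqO R2 S -> R1 = R2.
Proof.
move=> H1; elim: H1 R2 => [|R X S0 HR IH HX] R2 H2;
  case/seqOf_inv: H2 => [[E ->]|[Q [S1 [E HQ HX2]]]] //.
- by move/esym: E => /rcons_nil.
- by move: E => /rcons_nil.
- case: (rcons_inj E) => E1 E2.
  subst S1; have EQ := IH _ HQ; subst Q.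
  have [_ Hm] := Hord (seq_can HR).
  have Xin : X \in ord R by rewrite Hm.
  have R2in : R2 \in ord R by rewrite Hm.
  by rewrite -(nth_index X Xin) E2 nth_index.
Qed.

Lemma prefix_rconsE (S S0 : seq nat) j : prefix S (rcons S0 j) ->
  S = rcons S0 j \/ prefix S S0.
Proof.
case/prefixP => s E; case/lastP: s E => [|s x] E.
  by left; rewrite E cats0.
right; rewrite -rcons_cat in E; case/rcons_inj: E => -> _.
exact: prefix_prefix.
Qed.

Lemma seq_prefix R' S' S : seqO R' S' -> prefix S S' ->
  exists R0, [/\ seqO R0 S, R' \subset R0 & (S != S' -> R' \subset R0 :\: CRs R0)].
Proof.
move=> H; elim: H S => [|R X S0 HR IH HX] S HS.
  move: HS; rewrite prefixs0 => /eqP ->; exists setT.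
  split; [exact: seqT | exact: subxx | by rewrite eqxx].
have XsubD := comps_sub HX.
have XsubR : X \subset R := subset_trans XsubD (subsetDl R (CRs R)).
case/prefix_rconsE: HS => [->|HS].
  exists X; split => //; [exact: seqC | by rewrite eqxx].
case: (eqVneq S S0) => [->|ne].
  by exists R; split.
have [R0 [H0 sub0 ssub]] := IH _ HS; exists R0; split => //.
  exact: subset_trans XsubR sub0.
by move=> _; apply: subset_trans XsubR (ssub ne).
Qed.

Lemma strict_contra Ra Sa Rb Sb w : seqO Ra Sa -> seqO Rb Sb ->
  prefix Sa Sb -> Sa != Sb -> w \in Rb -> w \notin CRs Ra.
Proof.
move=> Ha Hb p ne wb.
have [R0 [H0 _ ss]] := seq_prefix Hb p.
rewrite -(seq_fun H0 Ha).
by move/subsetP: (ss ne) => /(_ _ wb); rewrite inE => /andP [].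
Qed.

Lemma lcp_pre (s t : seq nat) : prefix (lcp s t) s && prefix (lcp s t) t.
Proof.
elim: s t => [|a s IH] [|b t] //=.
case: eqP => [<-|_] //=; case/andP: (IH t) => h1 h2.
by rewrite !eqxx h1 h2.
Qed.

Lemma lcp_prefixE (s t : seq nat) : prefix s t -> lcp s t = s.
Proof.
elim: s t => [|a s IH] [|b t] //=.
by case/andP => /eqP -> H; rewrite eqxx IH.
Qed.

Lemma lcp_cases (s t : seq nat) : [\/ prefix s t, prefix t s |
  exists a b s' t', [/\ a != b, s = lcp s t ++ a :: s' & t = lcp s t ++ b :: t']].
Proof.
elim: s t => [|a s IH] [|b t] /=; try by constructor 1. 
  by constructor 2.
case: eqVneq => [<-|ne] /=.
  case: (IH t) => [H|H|[x [y [s' [t' [xy E1 E2]]]]]].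
  - by constructor 1.
  - by constructor 2.
  - constructor 3; exists x, y, s', t'; split => //; [by rewrite /= -E1 | by rewrite /= -E2].
constructor 3; exists a, b, s, t; split => //.
Qed.

Lemma prefix_total (a b s : seq nat) : prefix a s -> prefix b s ->
  prefix a b \/ prefix b a.
Proof.
rewrite [prefix a s]prefixE [prefix b s]prefixE => /eqP Ea /eqP Eb.
case: (leqP (size a) (size b)) => h.
  by left; rewrite prefixE -Eb take_takel // Ea.
by right; rewrite prefixE -Ea take_takel ?Eb // ltnW.
Qed.

Lemma prefix_antisym (a b : seq nat) : prefix a b -> prefix b a -> a = b.
Proof.
move=> ab ba; have := size_prefix ab; have := size_prefix ba => h1 h2.
have E : size a = size b by apply/eqP; rewrite eqn_leq h1 h2.
by move: ab; rewrite prefixE E take_size => /eqP.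
Qed.

Lemma pprefix_size (s t : seq nat) : pprefix s t -> size s < size t.
Proof.
case/andP => /prefixP [s' ->] ne; rewrite size_cat -{1}(addn0 (size s)) ltn_add2l.
by case: s' ne => //; rewrite cats0 eqxx.
Qed.

Lemma diverge_comps R1 S1 R2 S2 P a b s1 s2 : seqO R1 S1 -> seqO R2 S2 ->
  S1 = P ++ a :: s1 -> S2 = P ++ b :: s2 -> a != b ->
  exists Q Y1 Y2, [/\ Y1 \in comps parent (Q :\: CRs Q),
     Y2 \in comps parent (Q :\: CRs Q), R1 \subset Y1, R2 \subset Y2 & Y1 != Y2].
Proof.
move=> H1 H2 E1 E2 ab.
have p1 : prefix (rcons P a) S1 by rewrite E1 -cat_rcons prefix_prefix.
have p2 : prefix (rcons P b) S2 by rewrite E2 -cat_rcons prefix_prefix.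
have [Y1 [HY1 s1' _]] := seq_prefix H1 p1.
have [Y2 [HY2 s2' _]] := seq_prefix H2 p2.
case/seqOf_inv: HY1 => [[E _]|[Q [S0 [E HQ HX1]]]]; first by move: E => /rcons_nil.
case/seqOf_inv: HY2 => [[E' _]|[Q' [S0' [E' HQ' HX2]]]]; first by move: E' => /rcons_nil.
case/rcons_inj: E => ES0 Ea; case/rcons_inj: E' => ES0' Eb.
subst S0 S0'; have EQ := seq_fun HQ HQ'; subst Q'.
exists Q, Y1, Y2; split => //; apply/eqP => EY.
by move: ab; rewrite Ea Eb EY eqxx.
Qed.

Lemma laminar R1 S1 R2 S2 w : seqO R1 S1 -> seqO R2 S2 -> w \in R1 -> w \in R2 ->
  prefix S1 S2 \/ prefix S2 S1.
Proof.
move=> H1 H2 w1 w2.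
case: (lcp_cases S1 S2) => [h|h|[a [b [s' [t' [ab E1 E2]]]]]]; [by left|by right|].
have [Q [Y1 [Y2 [HY1 HY2 sub1 sub2 ne]]]] := diverge_comps H1 H2 E1 E2 ab.
have wY1 : w \in Y1 by move/subsetP: sub1; apply.
have wY2 : w \in Y2 by move/subsetP: sub2; apply.
by move/eqP: ne; case; apply: comps_eq HY1 HY2 wY1 wY2.
Qed.

Lemma CR_in R S u : seqO R S -> u \in CRs R -> u \in R.
Proof. by move=> H uC; move/subsetP: (CR_sub (seq_good H)); apply. Qed.

Lemma seq_unique R1 S1 R2 S2 u : seqO R1 S1 -> seqO R2 S2 ->
  u \in CRs R1 -> u \in CRs R2 -> S1 = S2.
Proof.
move=> H1 H2 u1 u2.
have uR1 := CR_in H1 u1; have uR2 := CR_in H2 u2.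
case: (eqVneq S1 S2) => // ne.
case: (laminar H1 H2 uR1 uR2) => p.
  by move: (strict_contra H1 H2 p ne uR2); rewrite u1.
by move: (strict_contra H2 H1 p (contra_neq esym ne) uR1); rewrite u2.
Qed.

Lemma exit_pp Ru Su Ru' Su' u' x : seqO Ru Su -> seqO Ru' Su' -> u' \in CRs Ru' ->
  u' \notin Ru -> x \in Ru -> adj parent x u' -> pprefix Su' Su.
Proof.
move=> HU HU' u'C u'nR xR axu.
have u'R' := CR_in HU' u'C.
case: (lcp_cases Su' Su) => [h|h|[a [b [s' [t' [ab E1 E2]]]]]].
- rewrite /pprefix h /=; apply/eqP => E; subst Su'.
  by move: u'nR; rewrite -(seq_fun HU' HU) u'R'.
- have [R0 [H0 sub _]] := seq_prefix HU' h.
  rewrite (seq_fun H0 HU) in sub.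
  by move/subsetP: sub => /(_ _ u'R'); rewrite (negbTE u'nR).
- exfalso; have [Q [Y1 [Y2 [HY1 HY2 sub1 sub2 ne]]]] := diverge_comps HU' HU E1 E2 ab.
  have u'Y1 : u' \in Y1 by move/subsetP: sub1; apply.
  have xY2 : x \in Y2 by move/subsetP: sub2; apply.
  have u'A : u' \in Q :\: CRs Q by move/subsetP: (comps_sub HY1); apply.
  have u'Y2 := comps_adj HY2 xY2 u'A axu.
  by move/eqP: ne; apply; apply: comps_eq HY1 HY2 u'Y1 u'Y2.
Qed.

Lemma Pmid RP P Ru' Su' Su u' : seqO RP P -> seqO Ru' Su' -> u' \in CRs Ru' ->
  prefix P Su -> prefix Su' Su -> u' \in RP -> prefix P Su'.
Proof.
move=> HP HU' u'C p1 p2 u'P.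
case: (prefix_total p1 p2) => // h.
case: (eqVneq Su' P) => [->|ne]; first exact: prefix_refl.
by move: (strict_contra HU' HP h ne u'P); rewrite u'C.
Qed.

Lemma finish u v u' Ru Rv Ru' Su Sv Su' :
  seqO Ru Su -> u \in CRs Ru -> seqO Rv Sv -> v \in CRs Rv ->
  seqO Ru' Su' -> u' \in CRs Ru' ->
  (v \notin Ru -> forall RP, conn parent RP -> u \in RP -> v \in RP -> u' \in RP) ->
  (v \notin Ru -> u' \notin Ru /\ exists2 x, x \in Ru & adj parent x u') ->
  (forall Y, Y \in comps parent (Ru :\: CRs Ru) -> v \in Y -> u' \in CRs Y) ->
  [/\ (pprefix Su Sv -> size Su < size Su' /\ (Su' = Sv \/ pprefix Su' Sv)),
      (pprefix Sv Su -> size Su' < size Su /\ (Su' = Sv \/ pprefix Sv Su'))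
    & (size (lcp Su Sv) < minn (size Su) (size Sv) ->
        size Su' < size Su /\ (Su' = lcp Su Sv \/ pprefix (lcp Su Sv) Su'))].
Proof.
move=> HU uC HV vC HU' u'C Hbet Hexit Hin.
have uR := CR_in HU uC; have vR := CR_in HV vC.
have vin : v \in Ru -> prefix Su Sv.
  move=> vRu; case: (laminar HU HV vRu vR) => // h.
  case: (eqVneq Sv Su) => [->|ne]; first exact: prefix_refl.
  by move: (strict_contra HV HU h ne vRu); rewrite vC.
have concl : forall P RP, seqO RP P -> prefix P Su -> u \in RP -> v \in RP ->
    v \notin Ru -> size Su' < size Su /\ (Su' = P \/ pprefix P Su').
  move=> P RP HP pP uP vP vnR.
  have [u'nR [x xR axu]] := Hexit vnR.
  have pp := exit_pp HU HU' u'C u'nR xR axu.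
  split; first exact: pprefix_size.
  have u'P : u' \in RP by apply: (Hbet vnR) => //; case: (seq_good HP).
  have h := Pmid HP HU' u'C pP (proj1 (andP pp)) u'P.
  case: (eqVneq Su' P) => [->|ne]; first by left.
  by right; rewrite /pprefix h eq_sym ne.
split.
- case/andP => /prefixP [s' Es] ne.
  case: s' Es ne => [|j rest] Es ne; first by rewrite Es cats0 eqxx in ne.
  have pj : prefix (rcons Su j) Sv by rewrite Es -cat_rcons prefix_prefix.
  have [Y [HY sub _]] := seq_prefix HV pj.
  case/seqOf_inv: (HY) => [[E _]|[Q [S0 [E HQ HX]]]]; first by move: E => /rcons_nil.
  case/rcons_inj: E => ES0 _; subst S0; rewrite (seq_fun HQ HU) in HX.
  have vY : v \in Y by move/subsetP: sub; apply.
  have u'Y := Hin _ HX vY.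
  have ES : Su' = rcons Su j := seq_unique HU' HY u'C u'Y.
  rewrite ES size_rcons ltnSn; split => //.
  case: (eqVneq (rcons Su j) Sv) => [->|ne']; first by left.
  by right; rewrite /pprefix pj ne'.
- case/andP => h ne.
  have vnR : v \notin Ru.
    by apply/negP => /vin h'; move: ne; rewrite (prefix_antisym h h') eqxx.
  have [R0 [H0 sub _]] := seq_prefix HU h.
  rewrite (seq_fun H0 HV) in sub.
  apply: (concl _ _ HV h _ vR vnR); by move/subsetP: sub; apply.
- move=> hs.
  have vnR : v \notin Ru.
    by apply/negP => /vin h'; move: hs; rewrite (lcp_prefixE h') leq_min ltnn.
  case/andP: (lcp_pre Su Sv) => pS pV.
  have [R0 [H0 sub0 _]] := seq_prefix HU pS.
  have [R1 [H1 sub1 _]] := seq_prefix HV pV.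
  rewrite (seq_fun H1 H0) in sub1.
  apply: (concl _ _ H0 pS); [by move/subsetP: sub0; apply | by move/subsetP: sub1; apply | by []].
Qed.

Lemma main_sec u v u' Ru Rv Ru' Su Sv Su' :
  seqO Ru Su -> u \in CRs Ru -> seqO Rv Sv -> v \in CRs Rv ->
  seqO Ru' Su' -> u' \in CRs Ru' -> route parent (CRs Ru) u v u' ->
  [/\ (pprefix Su Sv -> size Su < size Su' /\ (Su' = Sv \/ pprefix Su' Sv)),
      (pprefix Sv Su -> size Su' < size Su /\ (Su' = Sv \/ pprefix Sv Su'))
    & (size (lcp Su Sv) < minn (size Su) (size Sv) ->
        size Su' < size Su /\ (Su' = lcp Su Sv \/ pprefix (lcp Su Sv) Su'))].
Proof.
move=> HU uC HV vC HU' u'C.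
have GU := seq_good HU; case: (GU) => _ cU BIU.
have uR := CR_in HU uC.
have CsubR : forall x, x \in CRs Ru -> x \in Ru.
  by move=> x; move/subsetP: (CR_sub GU); apply.
have XsubC : forall Y x, Y \in comps parent (Ru :\: CRs Ru) -> x \in Y ->
    x \in Ru /\ x \notin CRs Ru.
  move=> Y x HY xY; move/subsetP: (comps_sub HY) => /(_ _ xY).
  by rewrite inE => /andP [-> ->].
have GY : forall Y, Y \in comps parent (Ru :\: CRs Ru) -> Good Y.
  by move=> Y HY; apply: can_good; apply: canC (seq_can HU) HY.
rewrite /route; case: ifP => [uv|_]; last case: ifP => [vu|_] //.
- case=> x [xC xv Hdeep ch u'v].
  have ux := Hdeep _ uC uv.
  have Ex : parent u' = x := child_par ch.
  have u'nr := child_nroot ch.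
  have uu' : anc parent u u' by apply: anc_trans ux (child_anc ch).
  have noanc : forall z, anc parent u' z -> z \in CRs Ru -> anc parent z v -> False.
    move=> z u'z zC zv; have zx := Hdeep _ zC zv.
    have := anc_trans u'z zx; rewrite -Ex => /anc_self_par E.
    by rewrite E eqxx in u'nr.
  apply: (finish HU uC HV vC HU' u'C).
  + by move=> _ RP cP uP vP; apply: conn_convex cP uP vP uu' u'v.
  + move=> vnR; split.
      apply/negP => u'R.
      have [y [c [yR cR chc u'y cv]]] := walk_down u'R vnR u'v.
      have yC : y \in CRs Ru by apply: lR_in_CR yR (BIU _ _ yR chc cR).
      exact: noanc u'y yC (anc_trans (child_anc chc) cv).
    by exists x; [apply: CsubR | rewrite /adj ch orbT].
  + move=> Y HY vY.
    have [vR vC'] := XsubC _ _ HY vY.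
    have u'Y : u' \in Y.
      apply: (comps_in HY vY); rewrite connA_sym; apply: (anc_connect u'v).
      move=> z u'z zv; rewrite inE; apply/andP; split.
        by apply/negP => zC; apply: noanc u'z zC zv.
      exact: conn_convex cU uR vR (anc_trans uu' u'z) zv.
    have cY := comps_conn HY.
    have top : forall w, w \in Y -> anc parent u' w.
      apply: desc_top cY u'Y _ => pY; exfalso.
      have [_] := XsubC _ _ HY pY; by rewrite Ex xC.
    rewrite -(rt_eq u'Y top); apply: rt_in_CR; by rewrite (rt_eq u'Y top).
- case=> x [xC vx xu Hhigh Eu'].
  have xR := CsubR _ xC.
  have u'u : anc parent u' u by rewrite Eu'; apply: anc_trans (anc_par x) xu.
  have common : v != x -> [/\ anc parent v u', child parent x u' &
      (forall z, anc parent z u' -> z \in CRs Ru -> anc parent v z -> False)].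
    move=> vx'.
    have xnr : x != root.
      apply/eqP => E; move: vx; rewrite E => /anc_to_root E'.
      by rewrite E' E eqxx in vx'.
    split.
    - rewrite Eu'; exact: anc_parS vx vx'.
    - rewrite Eu'; exact: child_intro xnr.
    - move=> z zu' zC vz; have xz := Hhigh _ zC vz (anc_trans zu' u'u).
      have := anc_trans xz zu'; rewrite Eu' => /anc_self_par E.
      by rewrite E eqxx in xnr.
  have vx_of : v \notin Ru -> v != x.
    by move=> vnR; apply/eqP => E; rewrite E xR in vnR.
  apply: (finish HU uC HV vC HU' u'C).
  + move=> vnR RP cP uP vP; have [vu' _ _] := common (vx_of vnR).
    exact: conn_convex cP vP uP vu' u'u.
  + move=> vnR; have [vu' ch noanc] := common (vx_of vnR); split.
      apply/negP => u'R.
      have [y [yR pyR vy yu']] := walk_up u'R vnR vu'.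
      have top : forall w, w \in Ru -> anc parent y w.
        by apply: desc_top cU yR _ => p; rewrite p in pyR.
      have yC : y \in CRs Ru.
        by rewrite -(rt_eq yR top); apply: rt_in_CR; rewrite (rt_eq yR top).
      exact: noanc yu' yC vy.
    by exists x => //; rewrite /adj ch.
  + move=> Y HY vY.
    have [vR vC'] := XsubC _ _ HY vY.
    have vx' : v != x by apply/eqP => E; rewrite E xC in vC'.
    have [vu' ch noanc] := common vx'.
    have u'Y : u' \in Y.
      apply: (comps_in HY vY); apply: (anc_connect vu').
      move=> z vz zu'; rewrite inE; apply/andP; split.
        by apply/negP => zC; apply: noanc zu' zC vz.
      exact: conn_convex cU vR uR vz (anc_trans zu' u'u).
    have xnY : x \notin Y by apply/negP => /(XsubC _ _ HY) [_]; rewrite xC.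
    case: (GY _ HY) => _ _ BIY.
    exact: lR_in_CR u'Y (BIY _ _ u'Y ch xnY).
Qed.

End Main.

Theorem lemma13 (n : nat) (root : 'I_n) (parent c1 : 'I_n -> 'I_n) (k : nat)
  (ord : {set 'I_n} -> seq {set 'I_n}) :
  is_tree root parent -> leftmost_ok parent c1 -> 4 <= k ->
  ord_ok root parent c1 k ord ->
  forall (u v u' : 'I_n) (Ru Rv Ru' : {set 'I_n}) (Su Sv Su' : seq nat),
  u != v ->
  seqOf root parent c1 k ord Ru Su -> u \in CR root parent c1 k Ru ->
  seqOf root parent c1 k ord Rv Sv -> v \in CR root parent c1 k Rv ->
  seqOf root parent c1 k ord Ru' Su' -> u' \in CR root parent c1 k Ru' ->
  route parent (CR root parent c1 k Ru) u v u' ->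
  [/\ (pprefix Su Sv ->
        size Su < size Su' /\ (Su' = Sv \/ pprefix Su' Sv)),
      (pprefix Sv Su ->
        size Su' < size Su /\ (Su' = Sv \/ pprefix Sv Su'))
    & (size (lcp Su Sv) < minn (size Su) (size Sv) ->
        size Su' < size Su /\
        (Su' = lcp Su Sv \/ pprefix (lcp Su Sv) Su'))].
Proof.
move=> Ht Hl _ Hord u v u' Ru Rv Ru' Su Sv Su' _ HU uC HV vC HU' u'C Hr.
exact: (main_sec Ht Hl Hord HU uC HV vC HU' u'C Hr).
Qed.
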